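(* Let $U\in\mathbb{U}_N$ and $\delta\ge0$. If at least a $2/3$ fraction of the vectors $\vec{x}\in\mathbb{Z}_4^n$ satisfy $D(U\sigma_{\vec{x}}U^\dagger,\mathcal{P}_n)\le\delta$, then $D(U\sigma_{\vec{y}}U^\dagger,\mathcal{P}_n)\le 2\delta$ for every $\vec{y}\in\mathbb{Z}_4^n$.
   Context: $n\ge1$, $N=2^n$, $\mathbb{U}_N$ the $N\times N$ unitaries. Pauli matrices $\sigma_0=I,\sigma_1=X,\sigma_2=Y,\sigma_3=Z$; for $\vec{x}\in\mathbb{Z}_4^n=\{0,1,2,3\}^n$, $\sigma_{\vec{x}}=\sigma_{x_1}\otimes\cdots\otimes\sigma_{x_n}$. Pauli group $\mathcal{P}_n=\{i^k\sigma_{\vec{x}}: k\in\{0,1,2,3\},\vec{x}\in\mathbb{Z}_4^n\}$. $\|A\|=\sqrt{\mathrm{tr}(A^\dagger A)}$; $D(A,B)=\min_{\theta\in[0,2\pi)}\frac{1}{\sqrt{2N}}\|e^{i\theta}A-B\|$; $D(A,\mathcal{S})=\inf_{B\in\mathcal{S}}D(A,B)$. *)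

(* Defs.v *)
From HB Require Import structures.
From mathcomp Require Import all_boot all_order all_algebra.
From mathcomp Require Import sesquilinear spectral.
Unset Printing Implicit Defensive.
Import Order.TTheory GRing.Theory Num.Theory.
Local Open Scope ring_scope.
Local Open Scope sesquilinear_scope.

Section Pauli.
Variable C : numClosedFieldType.

(* entry (r,c) (r,c in {0,1}) of sigma_a : I, X, Y, Z for a = 0,1,2,3 *)
Definition pauli1_entry (a r c : nat) : C :=
  match a with
  | 0 => if r == c then 1 else 0
  | 1 => if r == c then 0 else 1
  | 2 => if r == c then 0 else if r == 0%N then - 'i else 'i
  | _ => if r == c then (if r == 0%N then 1 else -1) else 0
  end.

Definition bit (b i : nat) : nat := odd (i %/ 2 ^ b).

(* sigma_x = sigma_{x_1} (x) ... (x) sigma_{x_n}; qubit k (0-indexed) is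
   the (n-1-k)-th binary digit of the row/column index (standard Kronecker
   ordering). *)
Definition pauli (n : nat) (x : {ffun 'I_n -> 'I_4}) : 'M[C]_(2 ^ n) :=
  \matrix_(i, j) \prod_(k < n)
     pauli1_entry (x k) (bit (n - 1 - k) i) (bit (n - 1 - k) j).

Definition pauli_group (n : nat) : pred 'M[C]_(2 ^ n) :=
  fun B => [exists k : 'I_4, exists x : {ffun 'I_n -> 'I_4},
              B == 'i ^+ k *: pauli n x].

Definition frob (m : nat) (A : 'M[C]_m) : C := sqrtC (\tr (A ^t* *m A)).

(* D(A,B) <= d, where D(A,B) = min over theta of
   ||e^{i theta} A - B|| / sqrt(2N); phases e^{i theta} are the c with |c| = 1,
   and the minimum is attained. *)
Definition distD_le (m : nat) (A B : 'M[C]_m) (d : C) : Prop :=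
  exists c : C, `|c| = 1 /\ frob m (c *: A - B) / sqrtC (2 * m%:R) <= d.

End Pauli.

(* D(A, P_n) <= d; P_n is finite so the infimum is a minimum. *)
Definition distP_le (C : numClosedFieldType) (n : nat) (A : 'M[C]_(2 ^ n)) (d : C) : Prop :=
  exists2 B, B \in pauli_group C n & distD_le C (2 ^ n) A B d.

(* Main.v *)
Require Import Defs.
From HB Require Import structures.
From mathcomp Require Import all_boot all_order all_algebra.
From mathcomp Require Import sesquilinear spectral zify.
Import Order.TTheory GRing.Theory Num.Theory.
Local Open Scope ring_scope.
Local Open Scope sesquilinear_scope.

Definition x4 (a b : nat) : nat :=
  if a == b then 0%N else if a == 0%N then b else if b == 0%N then a else (6 - a - b)%N.
Definition e4 (a b : nat) : nat :=
  match a, b with 1,2 => 1 | 2,1 => 3 | 2,3 => 1 | 3,2 => 3 | 3,1 => 1 | 1,3 => 3 | _,_ => 0 end%N.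

Section S.
Variable C : numClosedFieldType.

Lemma pauli1_mul (a b : 'I_4) (r t : bool) :
 \sum_(s : bool) pauli1_entry C a r s * pauli1_entry C b s t
   = 'i ^+ e4 a b * pauli1_entry C (x4 a b) r t.
Proof.
have hi : ('i : C) * 'i = -1 by rewrite -expr2 sqrCi.
rewrite big_bool.
case: a => [[|[|[|[|?]]]] ?] //; case: b => [[|[|[|[|?]]]] ?] //;
 case: r; case: t; rewrite /pauli1_entry /x4 /e4 /= ?expr0 ?expr1 ?mul1r ?mulr1 ?mul0r ?mulr0 ?addr0 ?add0r //.
all: try rewrite !exprS expr0 ?mulr1.
all: rewrite ?mulrN ?mulNr ?mulr1 ?mul1r ?opprK ?mulrA ?hi ?mulN1r ?mulrN1 ?opprK ?mulNr ?hi ?opprK //.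

Qed.

Definition bitb (b i : nat) : bool := odd (i %/ 2 ^ b).

Lemma bits_inj n : forall l1 l2, (l1 < 2^n)%N -> (l2 < 2^n)%N ->
  (forall b, (b < n)%N -> bitb b l1 = bitb b l2) -> l1 = l2.
Proof.
elim: n => [|n IH] l1 l2.
  by rewrite expn0 !ltnS !leqn0 => /eqP -> /eqP ->.
move=> h1 h2 hb.
have h0 := hb 0%N isT; rewrite /bitb expn0 !divn1 in h0.
have e : l1./2 = l2./2.
  apply: IH.
  - by rewrite -divn2 ltn_divLR // -expnSr.
  - by rewrite -divn2 ltn_divLR // -expnSr.
  move=> b hb'; rewrite /bitb -!divn2 -!divnMA -expnS; exact: hb.
by rewrite -(odd_double_half l1) -(odd_double_half l2) h0 e.
Qed.

Definition bvec n (l : 'I_(2^n)) : {ffun 'I_n -> bool} :=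
  [ffun k : 'I_n => bitb (n - 1 - k) l].

Lemma bvec_inj n : injective (bvec n).
Proof.
move=> l1 l2 e; apply: val_inj; apply: (@bits_inj n); rewrite ?ltn_ord // => b hb.
have hk : (n - 1 - b < n)%N by rewrite ltn_subLR; [lia|lia].
have := congr1 (fun f : {ffun _ -> _} => f (Ordinal hk)) e; rewrite !ffunE /=.
by have -> : (n - 1 - (n - 1 - b) = b)%N by lia.
Qed.

Lemma bvec_bij n : bijective (bvec n).
Proof.
apply: inj_card_bij; first exact: bvec_inj.
by rewrite card_ffun card_bool !card_ord.
Qed.

Lemma sum_prod_bits n (G : 'I_n -> bool -> C) :
 \sum_(l < 2^n) \prod_(k < n) G k (bitb (n - 1 - k) l)
   = \prod_(k < n) \sum_(s : bool) G k s.
Proof.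
rewrite bigA_distr_bigA /= (reindex (bvec n)) /=; last exact: onW_bij (bvec_bij n).
by apply: eq_bigr => l _; apply: eq_bigr => k _; rewrite ffunE.
Qed.


Lemma x4_lt a b : (a < 4)%N -> (b < 4)%N -> (x4 a b < 4)%N.
Proof. by case: a => [|[|[|[|?]]]] //; case: b => [|[|[|[|?]]]]. Qed.

Definition fx4 n (x z : {ffun 'I_n -> 'I_4}) : {ffun 'I_n -> 'I_4} :=
  [ffun k : 'I_n => inord (x4 (x k) (z k))].

Arguments fx4 {n}.
Lemma fx4E n (x z : {ffun 'I_n -> 'I_4}) (k : 'I_n) : (fx4 x z k : nat) = x4 (nat_of_ord (x k)) (nat_of_ord (z k)).
Proof. by rewrite ffunE inordK // x4_lt. Qed.

Lemma pauli_mul n (x z : {ffun 'I_n -> 'I_4}) :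
  pauli C n x *m pauli C n z
   = 'i ^+ (\sum_(k < n) e4 (nat_of_ord (x k)) (nat_of_ord (z k))) *: pauli C n (fx4 x z).
Proof.
apply/matrixP => i j; rewrite !mxE.
under eq_bigr => l _ do rewrite !mxE -big_split /=.
rewrite (@sum_prod_bits n (fun (k : 'I_n) (s : bool) =>
   pauli1_entry C (x k) (bitb (n - 1 - k) i) s *
   pauli1_entry C (z k) s (bitb (n - 1 - k) j))).
under eq_bigr => k _ do rewrite pauli1_mul -fx4E.
by rewrite big_split /= prodrXr.
Qed.

Lemma trC_mul m (A B : 'M[C]_m) : (A *m B)^t* = B^t* *m A^t*.
Proof. by rewrite trmx_mul map_mxM. Qed.

Lemma trC_scale m (a : C) (A : 'M[C]_m) : (a *: A)^t* = a^* *: A^t*.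
Proof. by apply/matrixP => i j; rewrite !mxE rmorphM. Qed.

Lemma trC_add m (A B : 'M[C]_m) : (A + B)^t* = A^t* + B^t*.
Proof. by apply/matrixP => i j; rewrite !mxE rmorphD. Qed.

Lemma unitary_l m (W : 'M[C]_m) : W \is unitarymx -> W^t* *m W = 1%:M.
Proof. by move=> hW; have := mulmxKtV (1%:M : 'M[C]_m) hW erefl; rewrite mul1mx. Qed.

Lemma frob_mulr m (X W : 'M[C]_m) : W \is unitarymx -> frob C m (X *m W) = frob C m X.
Proof.
move=> hW; rewrite /frob trC_mul -!mulmxA mxtrace_mulC -!mulmxA.
by rewrite (unitarymxP hW) mulmx1.
Qed.

Lemma frob_mull m (W X : 'M[C]_m) : W \is unitarymx -> frob C m (W *m X) = frob C m X.
Proof.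
move=> hW; rewrite /frob trC_mul -!mulmxA [W^t* *m (W *m X)]mulmxA.
by rewrite unitary_l // mul1mx.
Qed.

Lemma tr_dot m (X : 'M[C]_m) : \tr (X^t* *m X) = dotmx (mxvec X) (mxvec X).
Proof.
rewrite dotmxE !mxE /mxtrace.
rewrite (reindex (uncurry (@mxvec_index m m))) /=; last first.
  exact: curry_mxvec_bij.
under eq_bigr => i _ do rewrite mxE.
rewrite exchange_big pair_bigA /=.
apply: eq_bigr => -[i j] _ /=.
by rewrite !mxE mxvecE mulrC.
Qed.

Lemma frob_triangle m (X Y : 'M[C]_m) : frob C m (X + Y) <= frob C m X + frob C m Y.
Proof.
rewrite /frob !tr_dot linearD /=.
exact: (triangle_lerif (@dotmx C (m * m)) (mxvec X) (mxvec Y)).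
Qed.

Lemma frob_ge0 m (X : 'M[C]_m) : 0 <= frob C m X.
Proof. by rewrite /frob sqrtC_ge0 tr_dot dnorm_ge0. Qed.


Definition fz n : {ffun 'I_n -> 'I_4} := [ffun _ => ord0].

Lemma pauli0 n : pauli C n (fz n) = 1%:M.
Proof.
apply/matrixP => i j; rewrite !mxE.
have [<-|neij] := eqVneq i j.
  by apply: big1 => k _; rewrite ffunE /= eqxx.
case: (pickP (fun k : 'I_n => bvec n i k != bvec n j k)) => [k hk|h].
  rewrite (bigD1 k) //= ffunE /=.
  by move: hk; rewrite !ffunE; change (bit (n - 1 - k) i) with (nat_of_bool (bitb (n - 1 - k) i)); change (bit (n - 1 - k) j) with (nat_of_bool (bitb (n - 1 - k) j)); case: (bitb _ i); case: (bitb _ j); rewrite //= mul0r.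
have : bvec n i = bvec n j by apply/ffunP => k; have := h k; move/negbFE/eqP.
by move/bvec_inj => e; rewrite e eqxx in neij.
Qed.

Lemma pauli1_conj (a : 'I_4) (r t : bool) :
  (pauli1_entry C a r t)^* = pauli1_entry C a t r.
Proof.
case: a => [[|[|[|[|?]]]] ?] //; case: r; case: t;
  rewrite /pauli1_entry /= ?rmorph0 ?rmorph1 ?rmorphN1 //;
  try (by rewrite conjCi); try (apply: (canLR (@conjCK C)); by rewrite conjCi).
Qed.

Lemma pauli_herm n x : (pauli C n x)^t* = pauli C n x.
Proof.
apply/matrixP => i j; rewrite !mxE rmorph_prod; apply: eq_bigr => k _.
exact: (pauli1_conj (x k) (bitb _ j) (bitb _ i)).
Qed.

Lemma fx4_diag n (x : {ffun 'I_n -> 'I_4}) : fx4 x x = fz n.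
Proof.
apply/ffunP => k; apply: val_inj => /=; rewrite fx4E ffunE /=.
by rewrite /x4 eqxx.
Qed.

Lemma pauli_unitary n x : pauli C n x \is unitarymx.
Proof.
apply/unitarymxP; rewrite pauli_herm pauli_mul fx4_diag pauli0.
rewrite big1 ?expr0 ?scale1r // => k _.
by case: (x k) => [[|[|[|[|?]]]] ?].
Qed.

Lemma pgroup_unitary n (P : 'M[C]_(2 ^ n)) : P \in pauli_group C n -> P \is unitarymx.
Proof.
move=> /existsP [k /existsP [x /eqP ->]].
apply/unitarymxP; rewrite trC_scale -scalemxAl -scalemxAr scalerA.
rewrite (unitarymxP (pauli_unitary n x)) -normCK normrX normCi expr1n.
by rewrite expr1n scale1r.
Qed.


Lemma scale_unitary m (c : C) (W : 'M[C]_m) : `|c| = 1 -> W \is unitarymx -> c *: W \is unitarymx.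
Proof.
move=> hc hW; apply/unitarymxP; rewrite trC_scale -scalemxAl -scalemxAr scalerA.
by rewrite (unitarymxP hW) -normCK hc expr1n scale1r.
Qed.

Lemma conj_unitary n (U X : 'M[C]_n) : U \is unitarymx -> X \is unitarymx ->
  U *m X *m U^t* \is unitarymx.
Proof.
by move=> hU hX; rewrite !mul_unitarymx // trmxC_unitary.
Qed.

Lemma iexp_mod K : ('i : C) ^+ K = 'i ^+ (K %% 4).
Proof.
rewrite {1}(divn_eq K 4) exprD mulnC exprM.
have -> : ('i : C) ^+ 4 = 1 by rewrite (exprM _ 2 2) sqrCi -signr_odd expr0.
by rewrite expr1n mul1r.
Qed.

End S.
Arguments fx4 {n}.
Arguments scale_unitary {C m c W}. Arguments conj_unitary {C n U X}. Arguments pgroup_unitary {C n P}. Arguments frob_mull {C m W X}. Arguments frob_mulr {C m X W}. Arguments frob_triangle {C m}.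


Lemma x4_invl (a b : 'I_4) : x4 (x4 a b) b = a.
Proof. by case: a => [[|[|[|[|?]]]] ?] //; case: b => [[|[|[|[|?]]]] ?]. Qed.

Lemma x4_invr (a b : 'I_4) : x4 a (x4 a b) = b.
Proof. by case: a => [[|[|[|[|?]]]] ?] //; case: b => [[|[|[|[|?]]]] ?]. Qed.

Lemma fx4_invl n (x y : {ffun 'I_n -> 'I_4}) : fx4 (fx4 x y) y = x.
Proof.
apply/ffunP => k; apply: val_inj => /=; rewrite fx4E.
have -> : nat_of_ord (fx4 x y k) = nat_of_ord (inord (x4 (x k) (y k)) : 'I_4) by rewrite ffunE.
rewrite inordK ?x4_lt //; exact: x4_invl.
Qed.

Lemma fx4_invr n (x y : {ffun 'I_n -> 'I_4}) : fx4 x (fx4 x y) = y.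
Proof.
apply/ffunP => k; apply: val_inj => /=; rewrite fx4E.
have -> : nat_of_ord (fx4 x y k) = nat_of_ord (inord (x4 (x k) (y k)) : 'I_4) by rewrite ffunE.
rewrite inordK ?x4_lt //; exact: x4_invr.
Qed.

Lemma find_pair n (S : {set {ffun 'I_n -> 'I_4}}) (y : {ffun 'I_n -> 'I_4}) :
  (3 * #|S| >= 2 * 4 ^ n)%N -> exists2 x, x \in S & fx4 x y \in S.
Proof.
move=> hS.
set f := fun x : {ffun 'I_n -> 'I_4} => fx4 x y.
have finj : injective f by move=> a b /(congr1 (fun z => fx4 z y)); rewrite /f !fx4_invl.
have hc := cardsUI S (f @: S).
rewrite card_imset // in hc.
have hT : (#|S :|: f @: S| <= 4 ^ n)%N.
  by rewrite (leq_trans (max_card _)) // card_ffun !card_ord.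
have h4 : (0 < 4 ^ n)%N by rewrite expn_gt0.
case: (set_0Vmem (S :&: f @: S)) => [h0|[x]].
  rewrite h0 cards0 in hc; move: hc hT h4 hS.
  move: (4 ^ n)%N (#|S|) (#|S :|: f @: S|) => N a b; lia.
rewrite inE => /andP [hx /imsetP [x' hx' e]].
by exists x'; rewrite // -/(f x') -e.
Qed.

Theorem lemma5 (C : numClosedFieldType) (n : nat) (hn : (1 <= n)%N)
  (U : 'M[C]_(2 ^ n)) (hU : U \is unitarymx) (delta : C) (hdelta : 0 <= delta) :
  (exists S : {set {ffun 'I_n -> 'I_4}},
     (3 * #|S| >= 2 * 4 ^ n)%N /\
     forall x, x \in S -> distP_le C n (U *m pauli C n x *m (U ^t*)) delta) ->
  forall y : {ffun 'I_n -> 'I_4},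
    distP_le C n (U *m pauli C n y *m (U ^t*)) (2 * delta).
Proof.
move=> [S [hS hSd]] y.
have [x hx hx'] := find_pair _ _ y hS.
set x' := fx4 x y in hx'.
have [P1 hP1 [c1 [hc1 h1]]] := hSd x hx.
have [P2 hP2 [c2 [hc2 h2]]] := hSd x' hx'.
set E := (\sum_(k < n) e4 (x k) (x' k))%N.
have hm : pauli C n x *m pauli C n x' = 'i ^+ E *: pauli C n y.
  by rewrite pauli_mul /x' fx4_invr.
set A := U *m pauli C n x *m U^t*.
set B := U *m pauli C n x' *m U^t*.
have hA : (c1 *: A) \is unitarymx.
  exact: scale_unitary hc1 (conj_unitary hU (pauli_unitary _ _ x)).
have hP2u := pgroup_unitary hP2.
exists (P1 *m P2).
  move: hP1 hP2 => /existsP [k1 /existsP [z1 /eqP ->]] /existsP [k2 /existsP [z2 /eqP ->]].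
  apply/existsP; exists (Ordinal (ltn_pmod (k1 + k2 + \sum_(k<n) e4 (z1 k) (z2 k)) (isT : (0 < 4)%N))).
  apply/existsP; exists (fx4 z1 z2); apply/eqP.
  rewrite -scalemxAl -scalemxAr scalerA pauli_mul scalerA /= -iexp_mod !exprD.
  by [].
exists (c1 * c2 * 'i ^+ E); split.
  by rewrite !normrM normrX normCi expr1n hc1 hc2 !mul1r.
have key : (c1 * c2 * 'i ^+ E) *: (U *m pauli C n y *m U^t*) - P1 *m P2
   = (c1 *: A) *m (c2 *: B - P2) + (c1 *: A - P1) *m P2.
  rewrite mulmxBr mulmxBl addrA subrK.
  congr (_ - _).
  rewrite -scalemxAl -scalemxAr scalerA /A /B.
  rewrite !mulmxA (mulmxKtV _ hU) //.
  rewrite -(mulmxA U (pauli C n x)) hm -scalemxAr -scalemxAl scalerA.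
  by [].
rewrite key.
have ht := frob_triangle ((c1 *: A) *m (c2 *: B - P2)) ((c1 *: A - P1) *m P2).
rewrite frob_mull // frob_mulr // in ht.
apply: le_trans (ler_wpM2r _ ht) _.
  by rewrite invr_ge0 sqrtC_ge0 mulr_ge0 ?ler0n.
rewrite mulrDl.
have -> : 2 * delta = delta + delta by rewrite mulr_natl mulr2n.
exact: lerD h2 h1.
Qed.
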